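(* In the Setting, under (SA1)–(SA3), let $\mathcal I\in\wp_k[n]$, distinct $i,j\in\mathcal I$ and distinct $\alpha,\beta\in\mathcal I^{\mathtt C}$ be such that $Y(\mathcal I)^{ij}_{\alpha\beta}$ is a radical term. Then $0\notin\chi(\mathcal I\mid^{ij}_{\alpha\gamma})$ for every $\gamma\in\mathcal I^{\mathtt C}$ with $\gamma\ne\alpha$.
   Context: Setting. $d\ge1$, $1\le k\le n$; $\mathbf t=(t_1,\dots,t_d)$ indeterminates; $\Lambda:=\mathbb C[t_1^{\pm1},\dots,t_d^{\pm1}]$ (a UFD whose units are exactly the elements $c\,\mathbf t^{\mathbf e}:=c\prod_u t_u^{e_u}$, $c\in\mathbb C\setminus\{0\}$, $\mathbf e\in\mathbb Z^d$), $\mathbb F$ its fraction field, $\overline{\mathbb F}$ an algebraic closure. $[n]=\{1,\dots,n\}$, $\wp_k[n]$ the $k$-subsets of $[n]$. For $\mathcal I\in\wp_k[n]$: $\mathcal I^{\mathtt C}=[n]\setminus\mathcal I$; $\mathcal I^i_\alpha=(\mathcal I\setminus\{i\})\cup\{\alpha\}$ ($i\in\mathcal I,\alpha\notin\mathcal I$); $\mathcal I^{ij}_{\alpha\beta}=(\mathcal I\setminus\{i,j\})\cup\{\alpha,\beta\}$. $\mathbf L$ ($k\times n$) and $\mathbf R$ ($n\times k$) have entries in $\overline{\mathbb F}$; $\Delta_{\mathbf L}(\mathcal I)$, $\Delta_{\mathbf R}(\mathcal I)$ are the maximal minors on columns, resp. rows, $\mathcal I$; $h(\mathcal I):=\Delta_{\mathbf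 L}(\mathcal I)\Delta_{\mathbf R}(\mathcal I)$; $\mathfrak G:=\{\mathcal I:\Delta_{\mathbf L}(\mathcal I)\ne0\}$. (SA1) all $\Delta_{\mathbf R}(\mathcal I)\ne0$; (SA2) $h(\mathcal I)$ is a unit of $\Lambda$ for every $\mathcal I\in\mathfrak G$; (SA3) $\mathbf L$ has no zero column. $Y(\mathcal I)^{ij}_{\alpha\beta}:=-\mathrm{sign}[(i-\alpha)(i-\beta)(j-\alpha)(j-\beta)]\frac{\Delta_{\mathbf R}(\mathcal I^i_\alpha)\Delta_{\mathbf R}(\mathcal I^j_\beta)}{\Delta_{\mathbf R}(\mathcal I^i_\beta)\Delta_{\mathbf R}(\mathcal I^j_\alpha)}$. The multiset $\chi(\mathcal I\mid^{ij}_{\alpha\beta}):=\{h(\mathcal I)h(\mathcal I^{ij}_{\alpha\beta}),\,h(\mathcal I^i_\alpha)h(\mathcal I^j_\beta),\,h(\mathcal I^i_\beta)h(\mathcal I^j_\alpha)\}$. $Y(\mathcal I)^{ij}_{\alpha\beta}$ is radical if $0\notin\chi(\mathcal I\mid^{ij}_{\alpha\beta})$ and $Y(\mathcal I)^{ij}_{\alpha\beta}\notin\mathbb F$. *)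

(* Defs.v *)
From HB Require Import structures.
From mathcomp Require Import all_boot all_order all_algebra.
From mathcomp Require Import mpoly.
From mathcomp Require Import complex.
From mathcomp Require Import reals.
Set Implicit Arguments. Unset Strict Implicit. Unset Printing Implicit Defensive.
Import Order.TTheory GRing.Theory Num.Theory.
Local Open Scope ring_scope.

Notation Cplx R := (complex (Real.sort R)).

Section Defs.
Variables (R : realType) (d : nat) (K : fieldType).
(* phi : C[t_1..t_d] -> K, an injective ring morphism; K plays the role of F-bar *)
Variable phi : {mpoly (Cplx R)[d]} -> K.

(* x lies in (the image of) Lambda = C[t^{+-1}] : x * t^m is a polynomial for some monomial m *)
Definition inLambda (x : K) : Prop :=
  exists (m : 'X_{1..d}) (p : {mpoly (Cplx R)[d]}), x * phi 'X_[m] = phi p.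

Definition isLunit (x : K) : Prop := x != 0 /\ inLambda x /\ inLambda x^-1.

(* x lies in (the image of) F = Frac(Lambda) *)
Definition inF (x : K) : Prop :=
  exists (p q : {mpoly (Cplx R)[d]}), q != 0 /\ x = phi p / phi q.
End Defs.

Section Minors.
Variables (K : fieldType) (k n : nat).

Definition minorL (L : 'M[K]_(k, n)) (I : {set 'I_n}) : K :=
  \det (\matrix_(a < k, b < k)
          match onth (enum I) b with Some c => L a c | None => 0 end).

Definition minorR (Rm : 'M[K]_(n, k)) (I : {set 'I_n}) : K :=
  \det (\matrix_(a < k, b < k)
          match onth (enum I) a with Some c => Rm c b | None => 0 end).

Definition hh (L : 'M[K]_(k, n)) (Rm : 'M[K]_(n, k)) (I : {set 'I_n}) : K :=
  minorL L I * minorR Rm I.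

Definition swap1 (I : {set 'I_n}) (i a : 'I_n) : {set 'I_n} := a |: (I :\ i).
Definition swap2 (I : {set 'I_n}) (i j a b : 'I_n) : {set 'I_n} :=
  a |: (b |: ((I :\ i) :\ j)).

Definition Yterm (Rm : 'M[K]_(n, k)) (I : {set 'I_n}) (i j a b : 'I_n) : K :=
  - (Num.sg ((i%:Z - a%:Z) * (i%:Z - b%:Z) * (j%:Z - a%:Z) * (j%:Z - b%:Z)))%:~R
  * (minorR Rm (swap1 I i a) * minorR Rm (swap1 I j b))
  / (minorR Rm (swap1 I i b) * minorR Rm (swap1 I j a)).

Definition chi_nonzero (L : 'M[K]_(k, n)) (Rm : 'M[K]_(n, k))
    (I : {set 'I_n}) (i j a b : 'I_n) : Prop :=
  [/\ hh L Rm I * hh L Rm (swap2 I i j a b) != 0,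
      hh L Rm (swap1 I i a) * hh L Rm (swap1 I j b) != 0 &
      hh L Rm (swap1 I i b) * hh L Rm (swap1 I j a) != 0].
End Minors.

Definition radical (R : realType) (d : nat) (K : fieldType)
    (phi : {mpoly (Cplx R)[d]} -> K) (k n : nat)
    (L : 'M[K]_(k, n)) (Rm : 'M[K]_(n, k)) (I : {set 'I_n}) (i j a b : 'I_n) : Prop :=
  chi_nonzero L Rm I i j a b /\ ~ inF phi (Yterm Rm I i j a b).

(* Main.v *)
Require Import Defs.
From HB Require Import structures.
From mathcomp Require Import all_boot all_order all_algebra.
From mathcomp Require Import mpoly.
From mathcomp Require Import complex.
From mathcomp Require Import reals.
From mathcomp Require Import ring.
Import Order.TTheory GRing.Theory Num.Theory.
Local Open Scope ring_scope.
Set Implicit Arguments. Unset Strict Implicit. Unset Printing Implicit Defensive.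

Section Core.
Variables (K : fieldType) (F : K -> Prop).
Hypothesis F1 : F 1.
Hypothesis Fadd : forall x y, F x -> F y -> F (x + y).
Hypothesis Fopp : forall x, F x -> F (- x).
Hypothesis Fmul : forall x y, F x -> F y -> F (x * y).
Hypothesis Finv : forall x, F x -> F (x^-1).

Lemma Fsub x y : F x -> F y -> F (x - y). Proof. by move=> *; apply: Fadd => //; apply: Fopp. Qed.
Lemma Fdiv x y : F x -> F y -> F (x / y). Proof. by move=> *; apply: Fmul => //; apply: Finv. Qed.

Variables (rT cT : Type) (O : cT -> Prop) (m n' : rT -> cT -> K).
Definition DD (A : rT -> cT -> K) p1 p2 y1 y2 := A p1 y1 * A p2 y2 - A p2 y1 * A p1 y2.
Hypothesis H1 : forall p y, O y -> n' p y != 0.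
Hypothesis H2 : forall p y, O y -> m p y != 0 -> F (m p y * n' p y).
Hypothesis H3 : forall p1 p2 y1 y2, p1 <> p2 -> O y1 -> O y2 -> y1 <> y2 ->
  DD n' p1 p2 y1 y2 != 0.
Hypothesis H4 : forall p1 p2 y1 y2, p1 <> p2 -> O y1 -> O y2 -> y1 <> y2 ->
  DD m p1 p2 y1 y2 != 0 -> F (DD m p1 p2 y1 y2 * DD n' p1 p2 y1 y2).
Hypothesis H5 : forall y, O y -> exists p, m p y != 0.

Lemma pairL t s y g : t <> s -> y <> g -> O y -> O g -> m t g = 0 -> m t y != 0 ->
  m s g != 0 -> F (n' t g * n' s y / (n' t y * n' s g)).
Proof.
move=> ts yg Oy Og mtg mty msg.
have hD : DD m t s y g = m t y * m s g by rewrite /DD mtg mulr0 subr0.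
have hW := @H4 t s y g ts Oy Og yg; rewrite hD mulf_neq0 // in hW.
have := hW isT; rewrite -hD => {}hW.
have u1 := @H2 t y Oy mty; have u2 := @H2 s g Og msg.
have n1 := @H1 t y Oy; have n2 := @H1 s g Og.
have -> : n' t g * n' s y / (n' t y * n' s g) =
   1 - DD m t s y g * DD n' t s y g / ((m t y * n' t y) * (m s g * n' s g)).
  rewrite hD /DD; field; by rewrite n1 n2 mty msg.
by apply: Fsub => //; apply: Fdiv => //; apply: Fmul.
Qed.

Variables (pi pj : rT) (a b g : cT).
Hypotheses (hij : pi <> pj) (Oa : O a) (Ob : O b) (Og : O g)
  (hab : a <> b) (hga : g <> a) (hgb : g <> b).
Hypotheses (mia : m pi a != 0) (mib : m pi b != 0) (mja : m pj a != 0) (mjb : m pj b != 0)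
  (Dab : DD m pi pj a b != 0).
Hypothesis notF : ~ F (n' pi a * n' pj b / (n' pi b * n' pj a)).

Let nz := (@H1 pi a Oa, @H1 pi b Ob, @H1 pi g Og, @H1 pj a Oa, @H1 pj b Ob, @H1 pj g Og).

Lemma stepA : m pi g != 0 \/ m pj g != 0.
Proof.
case: (eqVneq (m pi g) 0) => [mig|]; last by left.
case: (eqVneq (m pj g) 0) => [mjg|]; last by right.
have [s ms] := @H5 g Og.
have si : pi <> s by move=> e; move: ms; rewrite -e mig eqxx.
have sj : pj <> s by move=> e; move: ms; rewrite -e mjg eqxx.
have R1 := pairL si (nesym hga) Oa Og mig mia ms.
have R2 := pairL si (nesym hgb) Ob Og mig mib ms.
have R3 := pairL sj (nesym hga) Oa Og mjg mja ms.
have R4 := pairL sj (nesym hgb) Ob Og mjg mjb ms.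
have nsa := @H1 s a Oa; have nsb := @H1 s b Ob; have nsg := @H1 s g Og.
case: notF.
have -> : n' pi a * n' pj b / (n' pi b * n' pj a) =
  (n' pj g * n' s a / (n' pj a * n' s g)) / (n' pj g * n' s b / (n' pj b * n' s g)) /
  ((n' pi g * n' s a / (n' pi a * n' s g)) / (n' pi g * n' s b / (n' pi b * n' s g))).
  by field; rewrite !nz nsa nsb nsg.
by apply: Fdiv; apply: Fdiv.
Qed.

Lemma stepB : m pi g != 0.
Proof.
apply/eqP => mig.
have mjg : m pj g != 0 by case: stepA; rewrite ?mig ?eqxx.
have R1 := pairL hij (nesym hga) Oa Og mig mia mjg.
have R2 := pairL hij (nesym hgb) Ob Og mig mib mjg.
case: notF.
have -> : n' pi a * n' pj b / (n' pi b * n' pj a) =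
  (n' pi g * n' pj b / (n' pi b * n' pj g)) / (n' pi g * n' pj a / (n' pi a * n' pj g)).
  by field; rewrite !nz.
by apply: Fdiv.
Qed.

Lemma stepC : m pj g != 0.
Proof.
apply/eqP => mjg.
have mig := stepB.
have R1 := pairL (nesym hij) (nesym hga) Oa Og mjg mja mig.
have R2 := pairL (nesym hij) (nesym hgb) Ob Og mjg mjb mig.
case: notF.
have -> : n' pi a * n' pj b / (n' pi b * n' pj a) =
  (n' pj g * n' pi a / (n' pj a * n' pi g)) / (n' pj g * n' pi b / (n' pj b * n' pi g)).
  by field; rewrite !nz.
by apply: Fdiv.
Qed.

Lemma stepD : DD m pi pj a g != 0.
Proof.
apply/eqP => Dag.
have mig := stepB; have mjg := stepC.
have emig : m pi g = m pi a * m pj g / m pj a.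
  move: Dag; rewrite /DD => /eqP; rewrite subr_eq0 => /eqP ->; field; by rewrite mja.
have Dbg : DD m pi pj b g != 0.
  apply/eqP => Dbg; move/eqP: Dab; apply.
  apply: (mulIf mjg); rewrite mul0r.
  move: Dbg; rewrite /DD emig => Dbg.
  have -> : (m pi a * m pj b - m pj a * m pi b) * m pj g =
     - m pj a * (m pi b * m pj g - m pj b * (m pi a * m pj g / m pj a)).
    field; by rewrite mja.
  by rewrite Dbg mulr0.
have uia := @H2 pi a Oa mia; have ujb := @H2 pj b Ob mjb; have uib := @H2 pi b Ob mib.
have uja := @H2 pj a Oa mja; have uig := @H2 pi g Og mig; have ujg := @H2 pj g Og mjg.
have Wab := @H4 pi pj a b hij Oa Ob hab Dab.
have Wbg := @H4 pi pj b g hij Ob Og (nesym hgb) Dbg.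
have Nag := @H3 pi pj a g hij Oa Og (nesym hga).
set A := (m pi a * n' pi a) * (m pj b * n' pj b).
set B := (m pi b * n' pi b) * (m pj a * n' pj a).
set C := DD m pi pj a b * DD n' pi pj a b.
set Dd := (m pi b * n' pi b) * (m pj g * n' pj g).
set E := (m pi g * n' pi g) * (m pj b * n' pj b).
set G := DD m pi pj b g * DD n' pi pj b g.
set r := m pi a * m pj b / (m pi b * m pj a).
have key : (B*(Dd+E-G)-Dd*(A+B-C))*r+(Dd*A-B*E) = 0.
  rewrite /A /B /C /Dd /E /G /r /DD emig; field; by rewrite mja mib.
have nzDA : Dd*A-B*E != 0.
  have -> : Dd*A-B*E = (m pi b * n' pi b) * (m pj b * n' pj b) *
     (m pi a * m pj g * DD n' pi pj a g).
    rewrite /A /B /Dd /E /DD emig; field; by rewrite mja.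
  by rewrite !mulf_neq0 // ?nz.
have FA : F A by apply: Fmul.
have FB : F B by apply: Fmul.
have FDd : F Dd by apply: Fmul.
have FE : F E by apply: Fmul.
have Fk : F (B*(Dd+E-G)-Dd*(A+B-C)).
  apply: Fsub; apply: Fmul => //; [apply: Fsub => //; apply: Fadd|apply: Fsub=>//; apply: Fadd] => //.
have kz : B*(Dd+E-G)-Dd*(A+B-C) != 0.
  apply/eqP => k0; move: key; rewrite k0 mul0r add0r => /eqP; by rewrite (negPf nzDA).
have Fr : F r.
  have -> : r = - (Dd*A-B*E) / (B*(Dd+E-G)-Dd*(A+B-C)).
    by apply: (mulIf kz); rewrite divfK //; apply/eqP; rewrite -addr_eq0 mulrC key.
  by apply: Fdiv => //; apply: Fopp; apply: Fsub; apply: Fmul.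
case: notF.
have -> : n' pi a * n' pj b / (n' pi b * n' pj a) = (A / B) / r.
  rewrite /A /B /r; field; by rewrite !nz mia mib mja mjb.
by apply: Fdiv => //; apply: Fdiv.
Qed.

Lemma core_all : m pi g != 0 /\ m pj g != 0 /\ DD m pi pj a g != 0.
Proof. split; [exact: stepB|split; [exact: stepC|exact: stepD]]. Qed.

End Core.

Section Mat.
Variables (K : fieldType) (k n : nat).

Definition rc (A : 'M[K]_(k,n)) (J : {set 'I_n}) : 'M[K]_k :=
  \matrix_(a < k, b < k) match onth (enum J) b with Some c => A a c | None => 0 end.
Lemma minorLE A J : minorL A J = \det (rc A J). Proof. by []. Qed.
Definition rr (A : 'M[K]_(n,k)) (J : {set 'I_n}) : 'M[K]_k :=
  \matrix_(a < k, b < k) match onth (enum J) a with Some c => A c b | None => 0 end.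
Lemma minorRE A J : minorR A J = \det (rr A J). Proof. by []. Qed.

Lemma rc_mul (B : 'M[K]_k) A J : rc (B *m A) J = B *m rc A J.
Proof.
apply/matrixP => a b; rewrite !mxE; case e: (onth (enum J) b) => [c|].
  rewrite mxE; apply: eq_bigr => r _; by rewrite !mxE e.
by rewrite big1 // => r _; rewrite mxE e mulr0.
Qed.

Lemma rr_mul (B : 'M[K]_k) A J : rr (A *m B) J = rr A J *m B.
Proof.
apply/matrixP => a b; rewrite !mxE; case e: (onth (enum J) a) => [c|].
  rewrite mxE; apply: eq_bigr => r _; by rewrite !mxE e.
by rewrite big1 // => r _; rewrite mxE e mul0r.
Qed.

Lemma rr_tr A J : rr A J = (rc A^T J)^T.
Proof. apply/matrixP => a b; rewrite !mxE; by case: onth => // c; rewrite mxE. Qed.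

Lemma onth_some (J : {set 'I_n}) (b : 'I_k) : #|J| = k -> exists c, onth (enum J) b = Some c.
Proof.
move=> hJ; case e: (onth (enum J) b) => [c|]; first by exists c.
have := onthTE (enum J) b; by rewrite e /= -cardE hJ ltn_ord.
Qed.

Lemma onth_in (J : {set 'I_n}) (b : nat) c : onth (enum J) b = Some c -> c \in J.
Proof. move=> e; rewrite -mem_enum; apply/onthP; by exists b. Qed.

Lemma onth_pos (J : {set 'I_n}) c : #|J| = k -> c \in J -> exists b : 'I_k, onth (enum J) b = Some c.
Proof.
move=> hJ; rewrite -mem_enum => /onthP [i e].
have ik : (i < k)%N by rewrite -hJ cardE -onthTE e.
by exists (Ordinal ik).
Qed.

Lemma index_onth (J : {set 'I_n}) (b : nat) c : onth (enum J) b = Some c -> index c (enum J) = b.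
Proof.
move=> e; have h : nth c (enum J) b = c by apply: onth_nth; exact: e.
rewrite -{1}h.
rewrite index_uniq ?enum_uniq //; by rewrite -onthTE e.
Qed.

Lemma onth_inj' (J : {set 'I_n}) (b1 b2 : 'I_k) c :
  onth (enum J) b1 = Some c -> onth (enum J) b2 = Some c -> b1 = b2.
Proof. move=> e1 e2; apply: val_inj; by rewrite /= -(index_onth e1) -(index_onth e2). Qed.

Definition colset (P : 'M[K]_k) b (v : 'I_k -> K) : 'M[K]_k :=
  \matrix_(r, c) if c == b then v r else P r c.
Definition dl (a : 'I_k) : 'I_k -> K := fun r => (r == a)%:R.

Lemma det_lin P b : \det P = \sum_a P a b * \det (colset P b (dl a)).
Proof.
rewrite (expand_det_col P b); apply: eq_bigr => a _; congr (_ * _).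
rewrite (expand_det_col _ b) (bigD1 a) //= big1 => [|r ra]; last first.
  by rewrite mxE eqxx /dl (negPf ra) mul0r.
rewrite mxE eqxx /dl eqxx mul1r addr0 /cofactor; congr (_ * _); congr (\det _).
apply/matrixP => i j; rewrite !mxE; by rewrite eq_sym (negPf (neq_lift _ _)).
Qed.

Lemma det_dupcol (Q : 'M[K]_k) c1 c2 : c1 != c2 -> (forall r, Q r c1 = Q r c2) -> \det Q = 0.
Proof.
move=> c12 h; rewrite -det_tr; apply: (determinant_alternate c12) => r; by rewrite !mxE.
Qed.

Lemma det_bool (Q : 'M[K]_k) : (forall r c, Q r c = 0 \/ Q r c = 1) ->
  exists z : int, \det Q = z%:~R.
Proof.
move=> h; exists (\det (\matrix_(r, c) ((Q r c == 1) : nat)%:Z)).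
rewrite -det_map_mx; congr (\det _); apply/matrixP => r c; rewrite !mxE.
by case: (h r c) => ->; rewrite ?eqxx // eq_sym oner_eq0.
Qed.

Lemma sum_collapse (f : 'I_k -> 'I_k -> K) p1 p2 : p1 != p2 ->
  (forall a1 a2, ~~ (((a1 == p1) && (a2 == p2)) || ((a1 == p2) && (a2 == p1))) -> f a1 a2 = 0) ->
  \sum_a1 \sum_a2 f a1 a2 = f p1 p2 + f p2 p1.
Proof.
move=> p12 h.
have S1 : \sum_a2 f p1 a2 = f p1 p2.
  rewrite (bigD1 p2) //= big1 ?addr0 // => a ap; apply: h.
  by rewrite eqxx (negPf ap) /= ?andbF ?orbF; apply/negP => /andP [/eqP e _]; move: p12; rewrite e eqxx.
have S2 : \sum_a2 f p2 a2 = f p2 p1.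
  rewrite (bigD1 p1) //= big1 ?addr0 // => a ap; apply: h.
  by rewrite eqxx (negPf ap) /= ?andbF ?orbF; apply/negP => /andP [/eqP e _]; move: p12; rewrite e eqxx.
rewrite (bigD1 p1) //= S1 (bigD1 p2) 1?eq_sym //= S2 big1 ?addr0 // => a /andP [a2 a1].
rewrite big1 // => a' _; apply: h; by rewrite (negPf a2) (negPf a1).
Qed.


Variable I : {set 'I_n}.
Hypothesis hI : #|I| = k.
Definition idI (A : 'M[K]_(k,n)) := forall r c, c \in I -> A r c = ((r:nat) == index c (enum I))%:R.
Definition base (J : {set 'I_n}) (r c : 'I_k) : K :=
  match onth (enum J) c with Some cc => ((r:nat) == index cc (enum I))%:R | None => 0 end.

Lemma card_swap1 x y : x \in I -> y \notin I -> #|swap1 I x y| = k.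
Proof.
move=> xI yI; have h := hI; rewrite (cardsD1 x I) xI in h.
by rewrite /swap1 cardsU1 in_setD1 (negPf yI) andbF -h.
Qed.

Lemma card_swap2 x1 x2 y1 y2 : x1 \in I -> x2 \in I -> x1 != x2 ->
  y1 \notin I -> y2 \notin I -> y1 != y2 -> #|swap2 I x1 x2 y1 y2| = k.
Proof.
move=> x1I x2I x12 y1I y2I y12.
have h := hI; rewrite (cardsD1 x1 I) x1I (cardsD1 x2 (I :\ x1)) in_setD1 eq_sym x12 x2I in h.
rewrite /swap2 cardsU1 cardsU1 !in_setU1 !in_setD1 (negPf y1I) (negPf y2I) (negPf y12) !andbF.
by rewrite -h.
Qed.

Lemma single_swap x y (bx : 'I_k) : x \in I -> y \notin I -> onth (enum I) bx = Some x ->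
 exists e : K, (exists z : int, e = z%:~R) /\ forall A, idI A -> minorL A (swap1 I x y) = A bx y * e.
Proof.
move=> xI yI ex.
set J := swap1 I x y.
have hJ : #|J| = k.
  have h := hI; rewrite (cardsD1 x I) xI in h.
  by rewrite /J /swap1 cardsU1 in_setD1 (negPf yI) andbF -h.
have yJ : y \in J by rewrite setU11.
have [by0 ey] := onth_pos hJ yJ.
pose E (v : 'I_k -> K) : 'M[K]_k := \matrix_(r, c) if c == by0 then v r else base J r c.
have E1 : forall A, idI A -> rc A J = E (fun r => A r y).
  move=> A hA; apply/matrixP => r c; rewrite !mxE /base.
  case: eqP => [->|cb]; first by rewrite ey.
  have [cc ec] := onth_some c hJ; rewrite ec; apply: hA.
  have ccJ := onth_in ec.
  move: ccJ; rewrite /J /swap1 in_setU1 in_setD1 => /orP [/eqP e|/andP[_ ->]] //.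
  by case: cb; apply: (onth_inj' ec); rewrite ey e.
have E2 : forall v, \det (E v) = \sum_a v a * \det (E (dl a)).
  move=> v; rewrite (det_lin _ by0); apply: eq_bigr => a _; rewrite mxE eqxx; congr (_ * \det _).
  apply/matrixP => r c; rewrite !mxE; by case: eqP.
have E3 : forall a, a != bx -> \det (E (dl a)) = 0.
  move=> a abx; have [ca eca] := onth_some a hI.
  have caI := onth_in eca.
  have cax : ca != x.
    apply/eqP => e; rewrite e in eca; by move: abx; rewrite (onth_inj' eca ex) eqxx.
  have caJ : ca \in J by rewrite /J /swap1 in_setU1 in_setD1 cax caI orbT.
  have [bc ebc] := onth_pos hJ caJ.
  have bcb : bc != by0.
    apply/eqP => e; rewrite e ey in ebc; case: ebc => e'; by move: yI; rewrite e' caI.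
  apply: (det_dupcol bcb) => r; rewrite !mxE (negPf bcb) eqxx /base ebc /dl (index_onth eca).
  by [].
exists (\det (E (dl bx))); split.
  apply: det_bool => r c; rewrite !mxE /dl /base.
  case: (c == by0); first by case: (r == bx); [right|left].
  case: onth => [cc|]; last by left.
  by case: (_ == _); [right|left].
move=> A hA; rewrite minorLE (E1 A hA) E2 (bigD1 bx) //= big1 ?addr0 // => a ab.
by rewrite E3 // mulr0.
Qed.


Lemma double_swap x1 x2 y1 y2 (p1 p2 : 'I_k) : x1 \in I -> x2 \in I -> x1 != x2 ->
  y1 \notin I -> y2 \notin I -> y1 != y2 ->
  onth (enum I) p1 = Some x1 -> onth (enum I) p2 = Some x2 ->
  exists e : K, (exists z : int, e = z%:~R) /\ forall A, idI A ->
    minorL A (swap2 I x1 x2 y1 y2) = (A p1 y1 * A p2 y2 - A p2 y1 * A p1 y2) * e.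
Proof.
move=> x1I x2I x12 y1I y2I y12 ex1 ex2.
set J := swap2 I x1 x2 y1 y2.
have inJ c : (c \in J) = [|| c == y1, c == y2 | [&& c != x2, c != x1 & c \in I]].
  by rewrite /J /swap2 !in_setU1 !in_setD1.
have hJ : #|J| = k.
  have h := hI; rewrite (cardsD1 x1 I) x1I (cardsD1 x2 (I :\ x1)) in_setD1 eq_sym x12 x2I in h.
  rewrite /J /swap2 cardsU1 cardsU1 !in_setU1 !in_setD1 (negPf y1I) (negPf y2I) (negPf y12) !andbF.
  by rewrite -h.
have p12 : p1 != p2.
  apply/eqP => e; rewrite e ex2 in ex1; case: ex1 => e'; by rewrite e' eqxx in x12.
have y1J : y1 \in J by rewrite inJ eqxx.
have y2J : y2 \in J by rewrite inJ eqxx orbT.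
have [b1 eb1] := onth_pos hJ y1J.
have [b2 eb2] := onth_pos hJ y2J.
have b12 : b1 != b2.
  apply/eqP => e; rewrite e eb2 in eb1; case: eb1 => e'; by rewrite e' eqxx in y12.
have b21 : b2 != b1 by rewrite eq_sym.
pose E (v w : 'I_k -> K) : 'M[K]_k :=
  \matrix_(r, c) if c == b1 then v r else if c == b2 then w r else base J r c.
have E1 : forall A, idI A -> rc A J = E (fun r => A r y1) (fun r => A r y2).
  move=> A hA; apply/matrixP => r c; rewrite !mxE /base.
  case: eqP => [->|cb1]; first by rewrite eb1.
  case: eqP => [->|cb2]; first by rewrite eb2.
  have [cc ec] := onth_some c hJ; rewrite ec; apply: hA.
  have := onth_in ec; rewrite inJ => /or3P [/eqP e|/eqP e|/and3P [_ _ ->]] //.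
    by case: cb1; apply: (onth_inj' ec); rewrite eb1 e.
  by case: cb2; apply: (onth_inj' ec); rewrite eb2 e.
have E2 : forall v w, \det (E v w) = \sum_a1 \sum_a2 (v a1 * w a2 * \det (E (dl a1) (dl a2))).
  move=> v w; rewrite (det_lin _ b1); apply: eq_bigr => a1 _; rewrite mxE eqxx.
  have -> : colset (E v w) b1 (dl a1) = E (dl a1) w.
    apply/matrixP => r c; rewrite !mxE; by case: eqP.
  rewrite (det_lin _ b2) mulr_sumr; apply: eq_bigr => a2 _; rewrite mxE (negPf b21) eqxx mulrA.
  congr (_ * \det _); apply/matrixP => r c; rewrite !mxE.
  by case: (c =P b2) => [->|_]; rewrite ?(negPf b21) ?eqxx.
have col : forall a, a != p1 -> a != p2 -> exists2 bc, (bc != b1) && (bc != b2) &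
    forall v w r, E v w r bc = dl a r.
  move=> a ap1 ap2; have [ca eca] := onth_some a hI.
  have caI := onth_in eca.
  have cax1 : ca != x1.
    apply/eqP => e; rewrite e in eca; by move: ap1; rewrite (onth_inj' eca ex1) eqxx.
  have cax2 : ca != x2.
    apply/eqP => e; rewrite e in eca; by move: ap2; rewrite (onth_inj' eca ex2) eqxx.
  have caJ : ca \in J by rewrite inJ cax1 cax2 caI !orbT.
  have [bc ebc] := onth_pos hJ caJ.
  have bcb1 : bc != b1.
    apply/eqP => e; rewrite e eb1 in ebc; case: ebc => e'; by move: y1I; rewrite e' caI.
  have bcb2 : bc != b2.
    apply/eqP => e; rewrite e eb2 in ebc; case: ebc => e'; by move: y2I; rewrite e' caI.
  exists bc; first by rewrite bcb1 bcb2.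
  by move=> v w r; rewrite !mxE (negPf bcb1) (negPf bcb2) /base ebc /dl (index_onth eca).
have E3 : forall a1 a2, ~~ (((a1 == p1) && (a2 == p2)) || ((a1 == p2) && (a2 == p1))) ->
    \det (E (dl a1) (dl a2)) = 0.
  move=> a1 a2 H.
  case: (eqVneq a1 a2) => [e|a12].
    by apply: (det_dupcol b12) => r; rewrite !mxE eqxx (negPf b21) eqxx e.
  have [a1p|a1p] := boolP ((a1 == p1) || (a1 == p2)); last first.
    move: a1p; rewrite negb_or => /andP [h1 h2]; have [bc /andP [bc1 bc2] hc] := col a1 h1 h2.
    by apply: (det_dupcol bc1) => r; rewrite hc !mxE eqxx.
  have [a2p|a2p] := boolP ((a2 == p1) || (a2 == p2)); last first.
    move: a2p; rewrite negb_or => /andP [h1 h2]; have [bc /andP [bc1 bc2] hc] := col a2 h1 h2.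
    by apply: (det_dupcol bc2) => r; rewrite hc !mxE eqxx (negPf b21).
  move: H a12; case/orP: a1p => /eqP -> ; case/orP: a2p => /eqP ->; by rewrite !eqxx ?orbT.
have Col : forall v w, \det (E v w) = v p1 * w p2 * \det (E (dl p1) (dl p2)) +
     v p2 * w p1 * \det (E (dl p2) (dl p1)).
  move=> v w; rewrite E2 (sum_collapse p12) // => a1 a2 H; by rewrite E3 // mulr0.
have anti : \det (E (dl p2) (dl p1)) = - \det (E (dl p1) (dl p2)).
  pose w0 := fun r => dl p1 r + dl p2 r.
  have h0 : \det (E w0 w0) = 0.
    by apply: (det_dupcol b12) => r; rewrite !mxE eqxx (negPf b21) eqxx.
  have w1 : w0 p1 = 1 by rewrite /w0 /dl eqxx (negPf p12) addr0.
  have w2 : w0 p2 = 1 by rewrite /w0 /dl eqxx eq_sym (negPf p12) add0r.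
  rewrite Col w1 w2 !mul1r in h0.
  by apply/eqP; rewrite -addr_eq0 addrC h0.
exists (\det (E (dl p1) (dl p2))); split.
  apply: det_bool => r c; rewrite !mxE /dl /base.
  case: (c == b1); first by case: (r == p1); [right|left].
  case: (c == b2); first by case: (r == p2); [right|left].
  case: onth => [cc|]; last by left.
  by case: (_ == _); [right|left].
move=> A hA; rewrite minorLE (E1 A hA) Col anti; ring.
Qed.

End Mat.

Section InF.
Variables (R : realType) (d : nat) (K : fieldType).
Variable phi : {rmorphism {mpoly (Cplx R)[d]} -> K}.
Hypothesis phi_inj : injective phi.

Lemma phi_neq0 q : q != 0 -> phi q != 0.
Proof. apply: contra => /eqP h; apply/eqP; apply: phi_inj; by rewrite h rmorph0. Qed.

Lemma neq0_phi q : phi q != 0 -> q != 0.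
Proof. apply: contra => /eqP ->; by rewrite rmorph0. Qed.

Lemma inF1 : inF phi 1.
Proof. exists 1, 1; split; first exact: oner_neq0. by rewrite rmorph1 divr1. Qed.

Lemma inF_int (z : int) : inF phi z%:~R.
Proof. exists z%:~R, 1; split; first exact: oner_neq0. by rewrite rmorph1 divr1 rmorph_int. Qed.

Lemma inFadd x y : inF phi x -> inF phi y -> inF phi (x + y).
Proof.
move=> [p1 [q1 [h1 ->]]] [p2 [q2 [h2 ->]]].
have f1 := phi_neq0 h1; have f2 := phi_neq0 h2.
exists (p1 * q2 + p2 * q1), (q1 * q2); split.
  by apply: neq0_phi; rewrite rmorphM mulf_neq0.
rewrite rmorphD !rmorphM; field; by rewrite f1 f2.
Qed.

Lemma inFopp x : inF phi x -> inF phi (- x).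
Proof.
move=> [p1 [q1 [h1 ->]]]; exists (- p1), q1; split => //; by rewrite rmorphN mulNr.
Qed.

Lemma inFmul x y : inF phi x -> inF phi y -> inF phi (x * y).
Proof.
move=> [p1 [q1 [h1 ->]]] [p2 [q2 [h2 ->]]].
have f1 := phi_neq0 h1; have f2 := phi_neq0 h2.
exists (p1 * p2), (q1 * q2); split.
  by apply: neq0_phi; rewrite rmorphM mulf_neq0.
rewrite !rmorphM; field; by rewrite f1 f2.
Qed.

Lemma inFinv x : inF phi x -> inF phi (x^-1).
Proof.
move=> [p1 [q1 [h1 ->]]].
have f1 := phi_neq0 h1.
case: (eqVneq p1 0) => [->|hp].
  exists 0, 1; split; first exact: oner_neq0. by rewrite !rmorph0 mul0r invr0 mul0r.
exists q1, p1; split => //.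
have f2 := phi_neq0 hp; rewrite invfM invrK mulrC; by [].
Qed.

Lemma unit_inF x : isLunit phi x -> inF phi x.
Proof.
move=> [_ [[m [p e]] _]].
have hX : 'X_[m] != 0 :> {mpoly (Cplx R)[d]}.
  apply/eqP => h; have := @mcoeffX d (Cplx R) m m; rewrite h mcoeff0 eqxx => /eqP; by rewrite eq_sym oner_eq0.
have f := phi_neq0 hX.
exists p, 'X_[m]; split => //; by rewrite -e mulfK.
Qed.

End InF.


Lemma left_nz (K : fieldType) (x y : K) : x * y != 0 -> x != 0.
Proof. by apply: contra => /eqP ->; rewrite mul0r. Qed.
Lemma right_nz (K : fieldType) (x y : K) : x * y != 0 -> y != 0.
Proof. by apply: contra => /eqP ->; rewrite mulr0. Qed.
Lemma mid_nz (K : fieldType) (x y z : K) : x * (y * z) != 0 -> y != 0.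
Proof. by move/right_nz/left_nz. Qed.

Theorem mainTheorem4
  (R : realType) (d : nat) (K : closedFieldType)
  (phi : {rmorphism {mpoly (Cplx R)[d]} -> K})
  (k n : nat) (L : 'M[K]_(k, n)) (Rm : 'M[K]_(n, k))
  (I : {set 'I_n}) (i j a b : 'I_n) :
  (0 < d)%N -> (1 <= k)%N -> (k <= n)%N ->
  (* phi is injective, and K is algebraic over phi(C[t]), so K is an algebraic closure of F *)
  injective phi ->
  (forall x : K, exists p : {poly {mpoly (Cplx R)[d]}},
      p != 0 /\ root (map_poly phi p) x) ->
  (* (SA1) *)
  (forall J : {set 'I_n}, #|J| = k -> minorR Rm J != 0) ->
  (* (SA2) *)
  (forall J : {set 'I_n}, #|J| = k -> minorL L J != 0 -> isLunit phi (hh L Rm J)) ->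
  (* (SA3) *)
  (forall c : 'I_n, exists r : 'I_k, L r c != 0) ->
  #|I| = k -> i \in I -> j \in I -> i != j ->
  a \notin I -> b \notin I -> a != b ->
  radical phi L Rm I i j a b ->
  forall g : 'I_n, g \notin I -> g != a -> chi_nonzero L Rm I i j a g.
Proof.
move=> _ _ _ inj _ SA1 SA2 SA3 hI iI jI ij aI bI ab [chi notY] g gI ga.
case: (eqVneq g b) => [->|gb]; first exact: chi.
case: chi => c1 c2 c3.
pose F := inF phi.
have Fdiv : forall x y, F x -> F y -> F (x / y).
  by move=> x y hx hy; apply: inFmul => //; apply: inFinv.
have hhI : hh L Rm I != 0 by move: c1; rewrite mulf_eq0 negb_or => /andP[].
have cL0 : minorL L I != 0 by move: hhI; rewrite /hh mulf_eq0 negb_or => /andP[].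
have cR0 : minorR Rm I != 0 := SA1 I hI.
set LI := rc L I.
have LIu : LI \in unitmx by rewrite unitmxE unitfE.
set M := invmx LI *m L.
have mL : forall J, minorL L J = minorL L I * minorL M J.
  move=> J; rewrite /M [minorL (_ *m _) J]minorLE rc_mul det_mulmx det_inv.
  rewrite minorLE -/LI (_ : minorL L I = \det LI) // mulVKf //; exact: cL0.
have idM : idI I M.
  move=> r c cI; have [bc ec] := onth_pos hI cI.
  have : (rc M I) r bc = M r c by rewrite mxE ec.
  rewrite /M rc_mul mulVmx // mxE => <-.
  by rewrite (index_onth ec).
set RI := rr Rm I.
have RIu : RI \in unitmx by rewrite unitmxE unitfE.
set NT := (Rm *m invmx RI)^T.
have mR : forall J, minorR Rm J = minorR Rm I * minorL NT J.
  move=> J; have h : minorR (Rm *m invmx RI) J = minorR Rm J * (minorR Rm I)^-1.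
    by rewrite !minorRE rr_mul det_mulmx det_inv.
  move: h; rewrite minorRE rr_tr det_tr -minorLE -/NT => ->.
  by rewrite mulrC divfK.
have idNT : idI I NT.
  move=> r c cI; have [bc ec] := onth_pos hI cI.
  have : (rr (Rm *m invmx RI) I) bc r = NT r c by rewrite mxE ec /NT [RHS]mxE.
  rewrite rr_mul mulmxV // mxE => <-.
  by rewrite (index_onth ec) eq_sym.
have FhhI : F (minorL L I * minorR Rm I) := unit_inF inj (SA2 I hI cL0).
have S : forall x y (p : 'I_k), onth (enum I) p = Some x -> y \notin I ->
   exists e, [/\ F e, e != 0, #|swap1 I x y| = k, minorL L (swap1 I x y) = minorL L I * (M p y * e)
     & minorR Rm (swap1 I x y) = minorR Rm I * (NT p y * e)].
  move=> x y p ex yI; have xI := onth_in ex.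
  have [e [[z ez] he]] := single_swap K hI xI yI ex.
  have eL : minorL L (swap1 I x y) = minorL L I * (M p y * e) by rewrite mL he.
  have eR : minorR Rm (swap1 I x y) = minorR Rm I * (NT p y * e) by rewrite mR he.
  exists e; split => //; first by rewrite ez; apply: inF_int.
    by move: (SA1 _ (card_swap1 hI xI yI)); rewrite eR !mulf_eq0 !negb_or => /andP [_ /andP [_ ?]].
  exact: card_swap1.
have D : forall x1 x2 y1 y2 (p1 p2 : 'I_k), onth (enum I) p1 = Some x1 ->
   onth (enum I) p2 = Some x2 -> p1 <> p2 -> y1 \notin I -> y2 \notin I -> y1 <> y2 ->
   exists e, [/\ F e, e != 0, #|swap2 I x1 x2 y1 y2| = k,
     minorL L (swap2 I x1 x2 y1 y2) = minorL L I * (DD M p1 p2 y1 y2 * e)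
     & minorR Rm (swap2 I x1 x2 y1 y2) = minorR Rm I * (DD NT p1 p2 y1 y2 * e)].
  move=> x1 x2 y1 y2 p1 p2 ex1 ex2 p12 y1I y2I y12.
  have x1I := onth_in ex1; have x2I := onth_in ex2.
  have x12 : x1 != x2.
    by apply/eqP => e; apply: p12; apply: (onth_inj' ex1); rewrite ex2 e.
  have y12' : y1 != y2 by apply/eqP.
  have [e [[z ez] he]] := double_swap K hI x1I x2I x12 y1I y2I y12' ex1 ex2.
  have eL : minorL L (swap2 I x1 x2 y1 y2) = minorL L I * (DD M p1 p2 y1 y2 * e) by rewrite mL he.
  have eR : minorR Rm (swap2 I x1 x2 y1 y2) = minorR Rm I * (DD NT p1 p2 y1 y2 * e)
    by rewrite mR he.
  exists e; split => //; first by rewrite ez; apply: inF_int.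
    by move: (SA1 _ (card_swap2 hI x1I x2I x12 y1I y2I y12')); rewrite eR !mulf_eq0 !negb_or => /andP [_ /andP [_ ?]].
  exact: card_swap2.
have H1 : forall (p : 'I_k) y, y \notin I -> NT p y != 0.
  move=> p y yI; have [x ex] := onth_some p hI.
  have [e [_ e0 hJ _ eR]] := S x y p ex yI.
  by move: (SA1 _ hJ); rewrite eR => /mid_nz.
have H2 : forall (p : 'I_k) y, y \notin I -> M p y != 0 -> F (M p y * NT p y).
  move=> p y yI mp; have [x ex] := onth_some p hI.
  have [e [Fe e0 hJ eL eR]] := S x y p ex yI.
  have mLnz : minorL L (swap1 I x y) != 0 by rewrite eL !mulf_neq0.
  have FJ := unit_inF inj (SA2 _ hJ mLnz).
  have -> : M p y * NT p y = hh L Rm (swap1 I x y) / ((minorL L I * minorR Rm I) * (e * e)).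
    rewrite /hh eL eR; field; by rewrite cL0 cR0 e0.
  by apply: Fdiv => //; apply: (inFmul inj) => //; apply: (inFmul inj).
have H3 : forall (p1 p2 : 'I_k) y1 y2, p1 <> p2 -> y1 \notin I -> y2 \notin I -> y1 <> y2 ->
    DD (fun p y => NT p y) p1 p2 y1 y2 != 0.
  move=> p1 p2 y1 y2 p12 y1I y2I y12.
  have [x1 ex1] := onth_some p1 hI; have [x2 ex2] := onth_some p2 hI.
  have [e [_ e0 hJ _ eR]] := D x1 x2 y1 y2 p1 p2 ex1 ex2 p12 y1I y2I y12.
  by move: (SA1 _ hJ); rewrite eR => /mid_nz.
have H4 : forall (p1 p2 : 'I_k) y1 y2, p1 <> p2 -> y1 \notin I -> y2 \notin I -> y1 <> y2 ->
    DD (fun p y => M p y) p1 p2 y1 y2 != 0 ->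
    F (DD (fun p y => M p y) p1 p2 y1 y2 * DD (fun p y => NT p y) p1 p2 y1 y2).
  move=> p1 p2 y1 y2 p12 y1I y2I y12 mp.
  have [x1 ex1] := onth_some p1 hI; have [x2 ex2] := onth_some p2 hI.
  have [e [Fe e0 hJ eL eR]] := D x1 x2 y1 y2 p1 p2 ex1 ex2 p12 y1I y2I y12.
  have mLnz : minorL L (swap2 I x1 x2 y1 y2) != 0 by rewrite eL !mulf_neq0.
  have FJ := unit_inF inj (SA2 _ hJ mLnz).
  have -> : DD (fun p y => M p y) p1 p2 y1 y2 * DD (fun p y => NT p y) p1 p2 y1 y2 =
      hh L Rm (swap2 I x1 x2 y1 y2) / ((minorL L I * minorR Rm I) * (e * e)).
    rewrite /hh eL eR; field; by rewrite cL0 cR0 e0.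
  by apply: Fdiv => //; apply: (inFmul inj) => //; apply: (inFmul inj).
have H5 : forall y, y \notin I -> exists p : 'I_k, M p y != 0.
  move=> y yI; case: (pickP (fun p : 'I_k => M p y != 0)) => [p hp|h0]; first by exists p.
  have [r hr] := SA3 y; move: hr.
  have eL : L = LI *m M by rewrite /M mulKVmx.
  rewrite eL mxE big1 ?eqxx // => p _.
  by have := h0 p; move=> /negbFE /eqP ->; rewrite mulr0.
have [pi epi] := onth_pos hI iI; have [pj epj] := onth_pos hI jI.
have pij : pi <> pj.
  by move=> e; rewrite e epj in epi; case: epi => e'; rewrite e' eqxx in ij.
have ab' : a <> b by apply/eqP.
have ga' : g <> a by apply/eqP.
have gb' : g <> b by apply/eqP.
have [eia [Feia eia0 cia Lia Ria]] := S i a pi epi aI.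
have [ejb [Fejb ejb0 cjb Ljb Rjb]] := S j b pj epj bI.
have [eib [Feib eib0 cib Lib Rib]] := S i b pi epi bI.
have [eja [Feja eja0 cja Lja Rja]] := S j a pj epj aI.
have [eig [Feig eig0 cig Lig Rig]] := S i g pi epi gI.
have [ejg [Fejg ejg0 cjg Ljg Rjg]] := S j g pj epj gI.
have [eab [Feab eab0 cab Lab Rab]] := D i j a b pi pj epi epj pij aI bI ab'.
have [eag [Feag eag0 cag Lag Rag]] := D i j a g pi pj epi epj pij aI gI (nesym ga').
have mia : M pi a != 0 by have h := left_nz (left_nz c2); rewrite Lia in h; exact: mid_nz h.
have mjb : M pj b != 0 by have h := left_nz (right_nz c2); rewrite Ljb in h; exact: mid_nz h.
have mib : M pi b != 0 by have h := left_nz (left_nz c3); rewrite Lib in h; exact: mid_nz h.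
have mja : M pj a != 0 by have h := left_nz (right_nz c3); rewrite Lja in h; exact: mid_nz h.
have Dab : DD (fun p y => M p y) pi pj a b != 0.
  by have h := left_nz (right_nz c1); rewrite Lab in h; exact: mid_nz h.
have notF : ~ F (NT pi a * NT pj b / (NT pi b * NT pj a)).
  move=> Fr; apply: notY; rewrite /Yterm Ria Rjb Rib Rja.
  set s := (Num.sg _)%:~R.
  have -> : - s * (minorR Rm I * (NT pi a * eia) * (minorR Rm I * (NT pj b * ejb))) /
      (minorR Rm I * (NT pi b * eib) * (minorR Rm I * (NT pj a * eja))) =
      - s * (eia * ejb / (eib * eja)) * (NT pi a * NT pj b / (NT pi b * NT pj a)).
    field; by rewrite cR0 eib0 eja0 !H1.
  apply: (inFmul inj) => //; apply: (inFmul inj); first by apply: inFopp; apply: inF_int.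
  by apply: Fdiv; apply: (inFmul inj).
have [mig [mjg Dag]] := @core_all K F (inF1 phi) (inFadd inj) (@inFopp _ _ _ phi) (inFmul inj)
  (inFinv inj) 'I_k 'I_n (fun y => y \notin I) (fun p y => M p y) (fun p y => NT p y)
  H1 H2 H3 H4 H5 pi pj a b g pij aI bI gI ab' ga' gb' mia mib mja mjb Dab notF.
split.
- apply: mulf_neq0 => //; apply: mulf_neq0; last exact: SA1.
  by rewrite Lag !mulf_neq0.
- apply: mulf_neq0; first exact: left_nz c2.
  apply: mulf_neq0; last exact: SA1.
  by rewrite Ljg !mulf_neq0.
- apply: mulf_neq0; last exact: right_nz c3.
  apply: mulf_neq0; last exact: SA1.
  by rewrite Lig !mulf_neq0.
Qed.
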